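(* Let $a\in\mathbb{C}$ with $2a$, $a$, $a+\tfrac12$, $a+1$ not nonpositive integers. Then for every integer $n\ge0$ and every $x\in\mathbb{C}$: $${}_2F_1\!\left(\begin{matrix}-2n,\,a+ix\\ 2a\end{matrix};2\right)={}_3F_2\!\left(\begin{matrix}-n,\,a+ix,\,a-ix\\ a+\frac12,\,a\end{matrix};1\right),\qquad {}_2F_1\!\left(\begin{matrix}-2n-1,\,a+ix\\ 2a\end{matrix};2\right)=\frac{x}{ia}\,{}_3F_2\!\left(\begin{matrix}-n,\,a+ix,\,a-ix\\ a+\frac12,\,a+1\end{matrix};1\right).$$ (That is, for Meixner-Pollaczek and continuous dual Hahn polynomials, $\frac{P_{2n}^{(a)}(x;\frac\pi2)}{P_{2n}^{(a)}(ia;\frac\pi2)}=\frac{S_n(x^2;a,\frac12,0)}{S_n(-a^2;a,\frac12,0)}$ and $\frac{P_{2n+1}^{(a)}(x;\frac\pi2)}{P_{2n+1}^{(a)}(ia;\frac\pi2)}=\frac{x\,S_n(x^2;a,\frac12,1)}{ia\,S_n(-a^2;a,\frac12,1)}$.)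
   Context: ${}_rF_s$ is the generalized hypergeometric series $\sum_k\frac{(a_1)_k\cdots(a_r)_k}{(b_1)_k\cdots(b_s)_k\,k!}z^k$, $(c)_k=c(c+1)\cdots(c+k-1)$; all series terminate. Meixner-Pollaczek: $P_n^{(\lambda)}(x;\phi)/P_n^{(\lambda)}(i\lambda;\phi)={}_2F_1(-n,\lambda+ix;2\lambda;1-e^{-2i\phi})$. Continuous dual Hahn: $S_n(x^2;a,b,c)/S_n(-a^2;a,b,c)={}_3F_2(-n,a+ix,a-ix;a+b,a+c;1)$. *)

(* Defs.v *)
(* Complex numbers: an arbitrary numClosedFieldType C
   (algebraically closed field with conjugation and 'i, e.g. algC). *)
From HB Require Import structures.
From mathcomp Require Import all_boot all_order all_algebra.
Set Implicit Arguments. Unset Strict Implicit. Unset Printing Implicit Defensive.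
Import Order.TTheory GRing.Theory Num.Theory.
Local Open Scope ring_scope.

Definition poch {R : nzRingType} (c : R) (k : nat) : R :=
  \prod_(j < k) (c + j%:R).

Definition not_nonpos_int {R : nzRingType} (c : R) : Prop :=
  forall k : nat, c != - (k%:R).

(* Terminating 2F1(-m, b; c; z): the series terminates at k = m since
   (-m)_k = 0 for k > m. *)
Definition F21_term {F : fieldType} (m : nat) (b c z : F) : F :=
  \sum_(k < m.+1)
     poch (- (m%:R) : F) k * poch b k / (poch c k * (k`!)%:R) * z ^+ k.

Definition F32_term {F : fieldType} (m : nat) (b1 b2 c1 c2 z : F) : F :=
  \sum_(k < m.+1)
     poch (- (m%:R) : F) k * poch b1 k * poch b2 k
       / (poch c1 k * poch c2 k * (k`!)%:R) * z ^+ k.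

(* Main.v *)
Require Import Defs.
From HB Require Import structures.
From mathcomp Require Import all_boot all_order all_algebra.
From mathcomp Require Import ring zify.
Import Order.TTheory GRing.Theory Num.Theory.
Local Open Scope ring_scope.

Lemma natid1 m j : (m.+1 * 'C(m.+2, j.+1) = 2 * j.+1 * 'C(m.+1, j.+1) + j * 'C(m.+1, j) + m.+1 * 'C(m, j.+1))%N.
Proof.
have d1 := mul_bin_diag m.+1 j. rewrite /= in d1.
case: j d1 => [|i] d1.
  rewrite bin0 !bin1 /=. nia.
have d2 := mul_bin_diag m.+1 i. rewrite /= in d2.
rewrite !binS. rewrite !binS in d1 d2. nia.
Qed.

Lemma natid2 n j : ((2*n+1) * 'C(n, j) = (2*j+2) * 'C(n, j.+1) + (2*j+1) * 'C(n, j))%N.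
Proof.
have d := mul_bin_left n j.
case: (leqP j n) => hj.
  nia.
rewrite !bin_small //; lia.
Qed.

Lemma natid3 n j : (n.+1 * 'C(n.+1, j) = j * 'C(n.+1, j) + n.+1 * 'C(n, j))%N.
Proof.
case: j => [|i]; first by rewrite !bin0; lia.
have d := mul_bin_diag n.+1 i. rewrite /= in d.
rewrite binS. rewrite binS in d. nia.
Qed.

Section S.
Variable F : numFieldType.

Lemma poch_S (c : F) k : poch c k.+1 = poch c k * (c + k%:R).
Proof. by rewrite /poch big_ord_recr. Qed.

Lemma poch0 (c : F) : poch c 0 = 1.
Proof. by rewrite /poch big_ord0. Qed.

Lemma poch_neq0 (c : F) k : not_nonpos_int c -> poch c k != 0.
Proof.
move=> h; elim: k => [|k IH]; first by rewrite poch0 oner_eq0.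
rewrite poch_S mulf_neq0 // addr_eq0; exact: h.
Qed.

Lemma poch_negn m k : poch (- (m%:R) : F) k = (-1) ^+ k * (m ^_ k)%:R.
Proof.
elim: k => [|k IH]; first by rewrite poch0 expr0 ffactn0 mul1r.
rewrite poch_S IH ffactnSr exprS natrM.
case: (leqP k m) => hk.
  rewrite natrB //; ring.
rewrite ffact_small //; ring.
Qed.

Lemma fact_neq0 k : (k`!)%:R != 0 :> F.
Proof. by rewrite pnatr_eq0 -lt0n fact_gt0. Qed.

Lemma poch_fact m k : poch (- (m%:R) : F) k / (k`!)%:R = (-1) ^+ k * 'C(m, k)%:R.
Proof.
rewrite poch_negn -bin_ffact natrM.
have := fact_neq0 k. move=> h. by field.
Qed.


Lemma F21E m (b c z : F) : (forall k, poch c k != 0) ->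
  F21_term m b c z = \sum_(k < m.+1) 'C(m, k)%:R * ((- z) ^+ k * poch b k / poch c k).
Proof.
move=> hc; apply: eq_bigr => k _.
have h1 := poch_fact m k. have h2 := hc k. have h3 := fact_neq0 k.
rewrite exprNn.
move: h1. set P := poch _ _. move=> h1.
have -> : P = (-1) ^+ k * 'C(m, k)%:R * (k`!)%:R.
  by rewrite -h1; field.
by field; rewrite h2 h3.
Qed.

Lemma F32E m (b1 b2 c1 c2 : F) : (forall k, poch c1 k != 0) -> (forall k, poch c2 k != 0) ->
  F32_term m b1 b2 c1 c2 1 = \sum_(k < m.+1) 'C(m, k)%:R *
     ((-1) ^+ k * poch b1 k * poch b2 k / (poch c1 k * poch c2 k)).
Proof.
move=> hc1 hc2; apply: eq_bigr => k _.
have h1 := poch_fact m k. have h2 := hc1 k. have h2' := hc2 k. have h3 := fact_neq0 k.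
move: h1. set P := poch _ _. move=> h1.
have -> : P = (-1) ^+ k * 'C(m, k)%:R * (k`!)%:R.
  by rewrite -h1; field.
rewrite expr1n. by field; rewrite h2 h2' h3.
Qed.

End S.

Lemma sum_widen (R : nzRingType) m N (t : nat -> R) : (m < N)%N ->
  \sum_(k < m.+1) 'C(m, k)%:R * t k = \sum_(k < N) 'C(m, k)%:R * t k.
Proof.
move=> h; rewrite -(subnKC h) big_split_ord /=.
rewrite [X in _ + X]big1 ?addr0 // => i _.
by rewrite bin_small ?mul0r // ltnS leq_addr.
Qed.

Section Rec.
Variable F : numFieldType.

Lemma coef1 (c : F) m j :
  (c + (m.+1)%:R) * 'C(m.+2, j.+1)%:R = 'C(m.+1, j.+1)%:R * (c + 2%:R * (j.+1)%:R)
     + 'C(m.+1, j)%:R * (c + j%:R) + (m.+1)%:R * 'C(m, j.+1)%:R.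
Proof.
have hN : (m.+1)%:R * 'C(m.+2, j.+1)%:R = 2%:R * (j.+1)%:R * 'C(m.+1,j.+1)%:R + j%:R*'C(m.+1,j)%:R + (m.+1)%:R * 'C(m,j.+1)%:R :> F.
  by rewrite -!natrM -!natrD natid1.
have hE : 'C(m.+2, j.+1)%:R = 'C(m.+1, j.+1)%:R + 'C(m.+1, j)%:R :> F by rewrite binS natrD.
rewrite mulrDl hN {1}hE. ring.
Qed.

Lemma recF (c b : F) (t : nat -> F)
  (ht : forall k, (c + k%:R) * t k.+1 = - (2%:R * (b + k%:R)) * t k) m :
  (c + (m.+1)%:R) * (\sum_(k < m.+3) 'C(m.+2, k)%:R * t k)
  = (c - 2%:R * b) * (\sum_(k < m.+2) 'C(m.+1, k)%:R * t k)
    + (m.+1)%:R * (\sum_(k < m.+1) 'C(m, k)%:R * t k).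
Proof.
have hm : (m < m.+3)%N by rewrite ltnS leqW.
rewrite (@sum_widen _ m.+1 m.+3 t) // (@sum_widen _ m m.+3 t hm).
have e1 : (c - 2%:R * b) * (\sum_(k < m.+3) 'C(m.+1, k)%:R * t k)
   = \sum_(k < m.+3) 'C(m.+1, k)%:R * ((c + 2%:R * k%:R) * t k)
   + \sum_(k < m.+3) 'C(m.+1, k)%:R * ((c + k%:R) * t k.+1).
  rewrite mulr_sumr -big_split /=; apply: eq_bigr => k _.
  rewrite ht. ring.
have e2 : \sum_(k < m.+3) 'C(m.+1, k)%:R * ((c + k%:R) * t k.+1)
   = \sum_(k < m.+3) (if (k : nat) is j.+1 then 'C(m.+1, j)%:R * (c + j%:R) else 0) * t k.
  rewrite big_ord_recr /= bin_small // mul0r addr0.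
  by rewrite [RHS]big_ord_recl /= mul0r add0r; apply: eq_bigr => i _; rewrite mulrA.
rewrite e1 e2 !mulr_sumr -!big_split /=; apply: eq_bigr => [[[|j] hj]] _ /=.
  rewrite !bin0; ring.
rewrite [in LHS]mulrA coef1. ring.
Qed.


Lemma recR1 (a w : F) (s r : nat -> F)
  (hk : forall j, 2%:R * w ^+ 2 * r j
          = a * ((2%:R * a + 2%:R * j%:R) * s j + (2%:R * a + 2%:R * j%:R + 1) * s j.+1)) n :
  a * (2%:R * a + (2 * n + 1)%:R) * (\sum_(k < n.+2) 'C(n.+1, k)%:R * s k)
  = 2%:R * w ^+ 2 * (\sum_(k < n.+1) 'C(n, k)%:R * r k)
    + a * (2 * n + 1)%:R * (\sum_(k < n.+1) 'C(n, k)%:R * s k).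
Proof.
rewrite (@sum_widen _ n n.+2 r) // (@sum_widen _ n n.+2 s) //.
have e1 : 2%:R * w ^+ 2 * (\sum_(k < n.+2) 'C(n, k)%:R * r k)
   = \sum_(k < n.+2) 'C(n, k)%:R * (a * (2%:R * a + 2%:R * k%:R) * s k)
   + \sum_(k < n.+2) 'C(n, k)%:R * (a * (2%:R * a + 2%:R * k%:R + 1) * s k.+1).
  rewrite mulr_sumr -big_split /=; apply: eq_bigr => k _.
  rewrite mulrCA hk. ring.
have e2 : \sum_(k < n.+2) 'C(n, k)%:R * (a * (2%:R * a + 2%:R * k%:R + 1) * s k.+1)
   = \sum_(k < n.+2) (if (k : nat) is j.+1 then 'C(n, j)%:R * (a * (2%:R * a + 2%:R * j%:R + 1)) else 0) * s k.
  rewrite big_ord_recr /= bin_small // mul0r addr0.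
  by rewrite [RHS]big_ord_recl /= mul0r add0r; apply: eq_bigr => i _; rewrite mulrA.
rewrite e1 e2 !mulr_sumr -!big_split /=; apply: eq_bigr => [[[|j] hj]] _ /=.
  rewrite !bin0 ?natrD ?natrM; ring.
have hE : 'C(n.+1, j.+1)%:R = 'C(n, j.+1)%:R + 'C(n, j)%:R :> F by rewrite binS natrD.
have hN : (2 * n + 1)%:R * 'C(n, j)%:R = (2 * j + 2)%:R * 'C(n, j.+1)%:R + (2 * j + 1)%:R * 'C(n, j)%:R :> F.
  by rewrite -!natrM -!natrD natid2.
apply/eqP; rewrite -subr_eq0; apply/eqP.
transitivity (a * s j.+1 * ((2%:R * a + (2 * n + 1)%:R) * ('C(n.+1, j.+1)%:R - ('C(n, j.+1)%:R + 'C(n, j)%:R))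
   + ((2 * n + 1)%:R * 'C(n, j)%:R - ((2 * j + 2)%:R * 'C(n, j.+1)%:R + (2 * j + 1)%:R * 'C(n, j)%:R)))).
  rewrite ?natrD ?natrM. ring.
by rewrite hE hN !subrr mulr0 add0r mulr0.
Qed.

Lemma recR2 (a : F) (s r : nat -> F)
  (hr : forall j, r j * (a + j%:R) = a * s j) n :
  (2%:R * a + (2 * n + 2)%:R) * (\sum_(k < n.+2) 'C(n.+1, k)%:R * r k)
  = 2%:R * a * (\sum_(k < n.+2) 'C(n.+1, k)%:R * s k)
    + (2 * n + 2)%:R * (\sum_(k < n.+1) 'C(n, k)%:R * r k).
Proof.
rewrite (@sum_widen _ n n.+2 r) //.
rewrite !mulr_sumr -!big_split /=; apply: eq_bigr => k _.
have hN : (n.+1)%:R * 'C(n.+1, k)%:R = k%:R * 'C(n.+1, k)%:R + (n.+1)%:R * 'C(n, k)%:R :> F.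
  by rewrite -!natrM -!natrD natid3.
apply/eqP; rewrite -subr_eq0; apply/eqP.
transitivity (2%:R * r k * ((n.+1)%:R * 'C(n.+1, k)%:R - (k%:R * 'C(n.+1, k)%:R + (n.+1)%:R * 'C(n, k)%:R))
   + 2%:R * 'C(n.+1, k)%:R * (r k * (a + k%:R) - a * s k)).
  rewrite ?natrD ?natrM. ring.
by rewrite hN hr !subrr !mulr0 addr0.
Qed.

End Rec.

Lemma poch_shift (F : numFieldType) (a : F) k : poch a k * (a + k%:R) = a * poch (a + 1) k.
Proof.
rewrite -poch_S /poch big_ord_recl /= addr0; congr (_ * _).
by apply: eq_bigr => i _; rewrite /= -addrA -nat1r.
Qed.

Lemma nnz (F : numFieldType) (c : F) k : not_nonpos_int c -> c + k%:R != 0.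
Proof. by move=> h; rewrite addr_eq0; exact: h. Qed.

Theorem mainTheorem13 (C : numClosedFieldType) (a : C)
  (h2a : not_nonpos_int (2%:R * a)) (ha : not_nonpos_int a)
  (ha12 : not_nonpos_int (a + 2%:R^-1)) (ha1 : not_nonpos_int (a + 1))
  (n : nat) (x : C) :
  F21_term (2 * n) (a + 'i * x) (2%:R * a) 2%:R
    = F32_term n (a + 'i * x) (a - 'i * x) (a + 2%:R^-1) a 1
  /\
  F21_term (2 * n).+1 (a + 'i * x) (2%:R * a) 2%:R
    = x / ('i * a) * F32_term n (a + 'i * x) (a - 'i * x) (a + 2%:R^-1) (a + 1) 1.
Proof.
set w := 'i * x.
have a0 : a != 0 by move: (ha 0%N); rewrite oppr0.
have two0 : (2%:R : C) != 0 by rewrite pnatr_eq0.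
have hc k := @poch_neq0 _ _ k h2a.
have hpa k := @poch_neq0 _ _ k ha.
have hph k := @poch_neq0 _ _ k ha12.
have hpa1 k := @poch_neq0 _ _ k ha1.
pose t k := (- 2%:R) ^+ k * poch (a + w) k / poch (2%:R * a) k.
pose s k := (-1) ^+ k * poch (a + w) k * poch (a - w) k / (poch (a + 2%:R^-1) k * poch a k).
pose r k := (-1) ^+ k * poch (a + w) k * poch (a - w) k / (poch (a + 2%:R^-1) k * poch (a + 1) k).
have FE m : F21_term m (a + w) (2%:R * a) 2%:R = \sum_(k < m.+1) 'C(m, k)%:R * t k.
  exact: F21E.
have GE m : F32_term m (a + w) (a - w) (a + 2%:R^-1) a 1 = \sum_(k < m.+1) 'C(m, k)%:R * s k.
  exact: F32E.
have HE m : F32_term m (a + w) (a - w) (a + 2%:R^-1) (a + 1) 1 = \sum_(k < m.+1) 'C(m, k)%:R * r k.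
  exact: F32E.
have e1 k : poch (a + 1) k = poch a k * (a + k%:R) / a.
  by rewrite poch_shift; field.
have ht k : (2%:R * a + k%:R) * t k.+1 = - (2%:R * (a + w + k%:R)) * t k.
  have := hc k; have := @nnz _ _ k h2a => h1 h2.
  by rewrite /t !poch_S exprS; field; rewrite h1 h2.
have hr j : r j * (a + j%:R) = a * s j.
  have h1 := hpa j. have h2 := hph j. have h3 := @nnz _ _ j ha.
  by rewrite /r /s e1; field; rewrite h1 h2 h3 a0.
have hk j : 2%:R * w ^+ 2 * r j
    = a * ((2%:R * a + 2%:R * j%:R) * s j + (2%:R * a + 2%:R * j%:R + 1) * s j.+1).
  have h1 := hpa j. have h2 := hph j. have h3 := @nnz _ _ j ha. have h4 := @nnz _ _ j ha12.
  have h5 : a * 2%:R + 1 + j%:R * 2%:R != 0.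
    have -> : a * 2%:R + 1 + j%:R * 2%:R = 2%:R * (a + 2%:R^-1 + j%:R) by field; rewrite ?two0.
    exact: mulf_neq0.
  by rewrite /r /s e1 !poch_S [(-1) ^+ j.+1]exprS; field; rewrite h1 h2 h3 h5 a0.
have ex : x / ('i * a) = - w / a.
  have hx : x = - ('i ^+ 2 * x) by rewrite sqrCi mulN1r opprK.
  rewrite /w {1}hx; field; by rewrite neq0Ci a0.
rewrite ex.
elim: n => [|n [IH1 IH2]].
  rewrite muln0 FE GE FE HE !big_ord1 big_ord_recr big_ord1 /t /s /r /= !poch0 !poch_S !poch0.
  rewrite !bin0 binn !expr0 !expr1.
  split; first by field; rewrite ?two0 ?a0.
  by field; rewrite ?two0 ?a0.
have e2 : (2 * n.+1 = (2 * n).+2)%N by rewrite mulnS.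
have P1 : F21_term (2 * n).+2 (a + w) (2%:R * a) 2%:R
          = F32_term n.+1 (a + w) (a - w) (a + 2%:R^-1) a 1.
  have R := recF _ _ _ _ ht (2 * n).
  rewrite -!FE IH1 IH2 in R.
  have R1 := recR1 _ _ _ s r hk n.
  rewrite -!GE -!HE in R1.
  have nz1 : a * (2%:R * a + (2 * n + 1)%:R) != 0 by rewrite mulf_neq0 // nnz.
  apply: (mulfI nz1); rewrite R1.
  transitivity (a * ((2%:R * a + (2 * n).+1%:R) * F21_term (2 * n).+2 (a + w) (2%:R * a) 2%:R)).
    by rewrite addn1; ring.
  rewrite R. by field; rewrite ?a0.
rewrite e2; split; first exact: P1.
have R := recF _ _ _ _ ht (2 * n).+1.
rewrite -!FE P1 IH2 in R.
have R2 := recR2 _ _ s r hr n.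
rewrite -!GE -!HE in R2.
have nz2 : 2%:R * a + (2 * n).+2%:R != 0 by rewrite nnz.
apply: (mulfI nz2); rewrite R.
transitivity (- w / a * ((2%:R * a + (2 * n + 2)%:R) * F32_term n.+1 (a + w) (a - w) (a + 2%:R^-1) (a + 1) 1)).
  rewrite R2. by field; rewrite ?a0.
by rewrite addn2; ring.
Qed.
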